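(* Let $0<\varepsilon_s<1/2$, $0<\varepsilon_a<1/2$ and $0<\varepsilon_{small}\le\varepsilon_s/2$. Let $\tilde M$ be a finite set of rectangles with $w(i)\le\varepsilon_{small}N$ and $h(i)\le N$ for all $i\in\tilde M$, and with $a(\tilde M)\le(\frac12+\varepsilon_a)N^2$. Then a subset of $\tilde M$ of cardinality at least $(1-2\varepsilon_s-2\varepsilon_a)|\tilde M|$ can be packed (without rotations, with pairwise disjoint interiors) into $[0,(1-\varepsilon_s)N]\times[0,N]$.
   Context: Rectangles are axis-parallel with width $w(i)$ and height $h(i)$; $a(S)=\sum_{i\in S}w(i)h(i)$. *)

(* Defs.v *)
From Stdlib Require Import Reals List.
Import ListNotations.
Open Scope R_scope.

(* Rectangles are indexed by 0..n-1; rectangle i has width w i and height h i. *)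

Definition area (w h : nat -> R) (S : list nat) : R :=
  fold_right (fun i acc => w i * h i + acc) 0 S.

Definition interiors_disjoint (x y w h x' y' w' h' : R) : Prop :=
  x + w <= x' \/ x' + w' <= x \/ y + h <= y' \/ y' + h' <= y.

Definition packable (w h : nat -> R) (S : list nat) (W H : R) : Prop :=
  exists px py : nat -> R,
    (forall i, In i S ->
       0 <= px i /\ px i + w i <= W /\ 0 <= py i /\ py i + h i <= H) /\
    (forall i j, In i S -> In j S -> i <> j ->
       interiors_disjoint (px i) (py i) (w i) (h i) (px j) (py j) (w j) (h j)).

(* Main.v *)
Require Import Defs.
From Stdlib Require Import Reals List Lra Lia Psatz Permutation.
Import ListNotations.
Open Scope R_scope.

Fixpoint sumf (f : nat -> R) (L : list nat) : R :=
  match L with [] => 0 | i :: L' => f i + sumf f L' end.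

Lemma area_sumf w h L : area w h L = sumf (fun i => w i * h i) L.
Proof. induction L; simpl; [reflexivity| rewrite IHL; reflexivity]. Qed.

Lemma sumf_perm f L M : Permutation L M -> sumf f L = sumf f M.
Proof. intro P; induction P; simpl; lra. Qed.

Lemma sumf_app f l1 l2 : sumf f (l1 ++ l2) = sumf f l1 + sumf f l2.
Proof. induction l1; simpl; lra. Qed.

Lemma sumf_le f g L : (forall i, In i L -> f i <= g i) -> sumf f L <= sumf g L.
Proof.
  induction L; simpl; intros H; [lra|].
  assert (f a <= g a) by auto. assert (sumf f L <= sumf g L) by auto. lra.
Qed.

Lemma sumf_bound f L b : (forall i, In i L -> f i <= b) -> sumf f L <= INR (length L) * b.
Proof.
  induction L; intros H; cbn [sumf length]; [simpl; lra|].
  rewrite S_INR. assert (f a <= b) by (apply H; left; auto).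
  assert (sumf f L <= INR (length L) * b) by (apply IHL; intros; apply H; right; auto). lra.
Qed.

Lemma sumf_nonneg f L : (forall i, In i L -> 0 <= f i) -> 0 <= sumf f L.
Proof.
  induction L; simpl; intros H; [lra|].
  assert (0 <= f a) by auto. assert (0 <= sumf f L) by auto. lra.
Qed.

Lemma max_elem f S : S <> [] -> exists x, In x S /\ sumf f S <= INR (length S) * f x.
Proof.
  induction S as [|y S IH]; intros Hne; [congruence|].
  destruct S as [|z S'].
  - exists y. simpl. split; auto. lra.
  - destruct IH as [x [Hx Hb]]; [discriminate|].
    change (length (y :: z :: S')) with (S (length (z :: S'))). rewrite S_INR.
    simpl sumf. simpl sumf in Hb.
    destruct (Rle_dec (f x) (f y)).
    + exists y. split; [left; auto|].
      assert (INR (length (z :: S')) * f x <= INR (length (z :: S')) * f y)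
        by (apply Rmult_le_compat_l; [apply pos_INR|auto]). lra.
    + exists x. split; [right; auto|]. lra.
Qed.

Lemma select (f : nat -> R) (L : list nat) : NoDup L -> forall d, (d <= length L)%nat ->
  exists S, NoDup S /\ incl S L /\ length S = (length L - d)%nat /\
    INR (length L) * sumf f S <= INR (length L - d) * sumf f L.
Proof.
  intros HL d. induction d as [|d IH]; intros Hd.
  - exists L. repeat split; auto. apply incl_refl. lia. rewrite Nat.sub_0_r; lra.
  - destruct IH as [S [HS [Hi [Hlen Hb]]]]; [lia|].
    destruct (max_elem f S) as [x [Hx Hm]].
    { intro E; subst; simpl in Hlen; lia. }
    destruct (in_split x S Hx) as [l1 [l2 E]]. subst S.
    exists (l1 ++ l2). split; [eapply NoDup_remove_1; eauto|].
    split. { intros z Hz. apply Hi. apply in_app_or in Hz. apply in_or_app. destruct Hz; [left|right;right]; auto. }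
    rewrite length_app in *. simpl in Hlen. split; [lia|].
    rewrite sumf_app in *. simpl sumf in *.
    assert (Em : (length L - d = S (length L - S d))%nat) by lia.
    rewrite Em in Hb. rewrite S_INR in Hb.
    assert (Em2 : (length l1 + S (length l2) = S (length L - S d))%nat) by (simpl; lia).
    simpl length in Hm. rewrite Em2, S_INR in Hm.
    set (m := INR (length L - S d)) in *. set (nn := INR (length L)) in *.
    assert (0 <= m) by apply pos_INR. assert (0 <= nn) by apply pos_INR.
    set (F := sumf f l1 + sumf f l2) in *.
    assert (H1 : nn * (sumf f l1 + (f x + sumf f l2)) <= nn * ((m + 1) * f x))
      by (apply Rmult_le_compat_l; auto).
    assert (H2 : (m+1) * (nn * F) <= m * ((m+1) * sumf f L)).
    { assert (m * (nn * (sumf f l1 + (f x + sumf f l2))) <= m * ((m + 1) * sumf f L))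
        by (apply Rmult_le_compat_l; auto).
      unfold F. nra. }
    apply (Rmult_le_reg_l (m+1)); [lra|]. nra.
Qed.

Fixpoint sortedW (w : nat -> R) (L : list nat) : Prop :=
  match L with [] => True | x :: L' => (forall z, In z L' -> w z <= w x) /\ sortedW w L' end.

Lemma insert_sorted w M : sortedW w M -> forall x, exists M', Permutation (x :: M) M' /\ sortedW w M'.
Proof.
  induction M as [|y M IH]; intros HM x.
  - exists [x]. split; [auto|]. simpl. split; [intros z []|auto].
  - destruct HM as [Hy HM].
    destruct (Rle_dec (w y) (w x)).
    + exists (x :: y :: M). split; [auto|]. simpl. split; [|split; auto].
      intros z [<-|Hz]; [lra|]. specialize (Hy z Hz). lra.
    + destruct (IH HM x) as [M' [P S']]. exists (y :: M'). split.
      * eapply perm_trans; [apply perm_swap|]. apply perm_skip; auto.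
      * simpl. split; auto. intros z Hz. apply (Permutation_in z (Permutation_sym P)) in Hz.
        destruct Hz as [<-|Hz]; [lra|]. auto.
Qed.

Lemma sort_exists w L : exists M, Permutation L M /\ sortedW w M.
Proof.
  induction L as [|x L IH].
  - exists []. simpl; auto.
  - destruct IH as [M [P S]]. destruct (insert_sorted w M S x) as [M' [P' S']].
    exists M'. split; auto. eapply perm_trans; [apply perm_skip; eauto| auto].
Qed.

Lemma disj_sym a b c d e f g k : interiors_disjoint a b c d e f g k -> interiors_disjoint e f g k a b c d.
Proof. unfold interiors_disjoint; intros; tauto. Qed.

Lemma col_aux (w h : nat -> R) (N : R) (L : list nat) : forall X c y a,
  NoDup L -> sortedW w L ->
  (forall z, In z L -> 0 < w z <= c /\ 0 < h z <= N /\ w z * y <= a) ->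
  0 <= y <= N -> 0 <= a ->
  exists px py E, 0 <= E /\ N * E <= a + 2 * area w h L /\
   (forall i, In i L -> X <= px i /\ px i + w i <= X + c + E /\ 0 <= py i /\ py i + h i <= N /\
       (X + c <= px i \/ y <= py i)) /\
   (forall i j, In i L -> In j L -> i <> j ->
       interiors_disjoint (px i) (py i) (w i) (h i) (px j) (py j) (w j) (h j)).
Proof.
  induction L as [|x L IH]; intros X c y a HN HS HB Hy Ha.
  - exists (fun _ => 0), (fun _ => 0), 0. simpl. split; [lra|split; [lra|]].
    split; intros; contradiction.
  - inversion HN as [|? ? Hx HN']; subst. destruct HS as [Hsx HS].
    destruct (HB x (or_introl eq_refl)) as [[Hw1 Hw2] [[Hh1 Hh2] Ha1]].
    simpl area.
    destruct (Rle_dec (y + h x) N) as [Hfit|Hfit].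
    +
      destruct (IH X c (y + h x) (a + w x * h x) HN' HS) as [px [py [E [HE0 [HE [Hin Hd]]]]]].
      { intros z Hz. destruct (HB z (or_intror Hz)) as [[? ?] [[? ?] ?]].
        specialize (Hsx z Hz). repeat split; try lra.
        assert (w z * h x <= w x * h x) by (apply Rmult_le_compat_r; lra). nra. }
      { lra. }
      { assert (0 < w x * h x) by (apply Rmult_lt_0_compat; lra). lra. }
      exists (fun i => if Nat.eq_dec i x then X else px i),
             (fun i => if Nat.eq_dec i x then y else py i), E.
      assert (0 <= w x * h x) by (apply Rmult_le_pos; lra). split; [lra|]. split; [lra|]. split.
      * intros i [<-|Hi].
        -- destruct (Nat.eq_dec x x) as [_|]; [|congruence]. repeat split; try lra.
        -- destruct (Nat.eq_dec i x) as [->|_]; [contradiction|].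
           destruct (Hin i Hi) as [? [? [? [? Hor]]]]. repeat split; try lra; try (destruct Hor; [left|right]; lra).
      * assert (Hxi : forall i, In i L -> interiors_disjoint X y (w x) (h x) (px i) (py i) (w i) (h i)).
        { intros i Hi. destruct (Hin i Hi) as [? [? [? [? Hor]]]]. unfold interiors_disjoint.
          destruct Hor; [left|right; right; left]; lra. }
        intros i j Hi Hj Hij.
        destruct (Nat.eq_dec i x) as [->|Hix]; destruct (Nat.eq_dec j x) as [->|Hjx].
        -- congruence.
        -- destruct Hj as [|Hj]; [congruence|]. apply Hxi; auto.
        -- destruct Hi as [|Hi]; [congruence|]. apply disj_sym, Hxi; auto.
        -- destruct Hi as [|Hi]; [congruence|]. destruct Hj as [|Hj]; [congruence|]. auto.
    +
      destruct (IH (X + c) (w x) (h x) (w x * h x) HN' HS) as [px [py [E [HE0 [HE [Hin Hd]]]]]].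
      { intros z Hz. destruct (HB z (or_intror Hz)) as [[? ?] [[? ?] ?]].
        specialize (Hsx z Hz). repeat split; try lra.
        apply Rmult_le_compat_r; lra. }
      { lra. }
      { apply Rmult_le_pos; lra. }
      exists (fun i => if Nat.eq_dec i x then X + c else px i),
             (fun i => if Nat.eq_dec i x then 0 else py i), (w x + E).
      split; [lra|]. split.
      { assert (w x * N <= w x * (y + h x)) by (apply Rmult_le_compat_l; lra). lra. }
      split.
      * intros i [<-|Hi].
        -- destruct (Nat.eq_dec x x) as [_|]; [|congruence]. repeat split; try lra.
        -- destruct (Nat.eq_dec i x) as [->|_]; [contradiction|].
           destruct (Hin i Hi) as [? [? [? [? Hor]]]]. repeat split; try lra.
      * assert (Hxi : forall i, In i L -> interiors_disjoint (X + c) 0 (w x) (h x) (px i) (py i) (w i) (h i)).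
        { intros i Hi. destruct (Hin i Hi) as [? [? [? [? Hor]]]]. unfold interiors_disjoint.
          destruct Hor; [left|right; right; left]; lra. }
        intros i j Hi Hj Hij.
        destruct (Nat.eq_dec i x) as [->|Hix]; destruct (Nat.eq_dec j x) as [->|Hjx].
        -- congruence.
        -- destruct Hj as [|Hj]; [congruence|]. apply Hxi; auto.
        -- destruct Hi as [|Hi]; [congruence|]. apply disj_sym, Hxi; auto.
        -- destruct Hi as [|Hi]; [congruence|]. destruct Hj as [|Hj]; [congruence|]. auto.
Qed.

Lemma col_pack (w h : nat -> R) (N wm X : R) (L : list nat) :
  0 < N -> 0 <= wm -> NoDup L -> sortedW w L ->
  (forall z, In z L -> 0 < w z <= wm /\ 0 < h z <= N) ->
  exists px py E, 0 <= E /\ N * E <= N * wm + 2 * area w h L /\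
   (forall i, In i L -> X <= px i /\ px i + w i <= X + E /\ 0 <= py i /\ py i + h i <= N) /\
   (forall i j, In i L -> In j L -> i <> j ->
       interiors_disjoint (px i) (py i) (w i) (h i) (px j) (py j) (w j) (h j)).
Proof.
  intros HN0 Hwm HN HS HB. destruct L as [|x L].
  - exists (fun _ => 0), (fun _ => 0), 0. simpl. split; [lra|]. split; [nra|]. split; intros; contradiction.
  - inversion HN as [|? ? Hx HN']; subst. destruct HS as [Hsx HS].
    destruct (HB x (or_introl eq_refl)) as [[Hw1 Hw2] [Hh1 Hh2]].
    destruct (col_aux w h N L X (w x) (h x) (w x * h x) HN' HS) as [px [py [E [HE0 [HE [Hin Hd]]]]]].
    { intros z Hz. destruct (HB z (or_intror Hz)) as [[? ?] [? ?]].
      specialize (Hsx z Hz). repeat split; try lra. apply Rmult_le_compat_r; lra. }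
    { lra. } { apply Rmult_le_pos; lra. }
    exists (fun i => if Nat.eq_dec i x then X else px i),
           (fun i => if Nat.eq_dec i x then 0 else py i), (w x + E).
    split; [lra|]. split.
    { simpl area. assert (N * w x <= N * wm) by (apply Rmult_le_compat_l; lra).
      assert (0 <= w x * h x) by (apply Rmult_le_pos; lra). lra. }
    split.
    * intros i [<-|Hi].
      -- destruct (Nat.eq_dec x x) as [_|]; [|congruence]. repeat split; try lra.
      -- destruct (Nat.eq_dec i x) as [->|_]; [contradiction|].
         destruct (Hin i Hi) as [? [? [? [? Hor]]]]. repeat split; try lra.
    * assert (Hxi : forall i, In i L -> interiors_disjoint X 0 (w x) (h x) (px i) (py i) (w i) (h i)).
      { intros i Hi. destruct (Hin i Hi) as [? [? [? [? Hor]]]]. unfold interiors_disjoint.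
        destruct Hor; [left|right; right; left]; lra. }
      intros i j Hi Hj Hij.
      destruct (Nat.eq_dec i x) as [->|Hix]; destruct (Nat.eq_dec j x) as [->|Hjx].
      -- congruence.
      -- destruct Hj as [|Hj]; [congruence|]. apply Hxi; auto.
      -- destruct Hi as [|Hi]; [congruence|]. apply disj_sym, Hxi; auto.
      -- destruct Hi as [|Hi]; [congruence|]. destruct Hj as [|Hj]; [congruence|]. auto.
Qed.

Lemma row_pack (w h : nat -> R) (X : R) (L : list nat) :
  NoDup L -> (forall z, In z L -> 0 <= w z) ->
  exists px py,
   (forall i, In i L -> X <= px i /\ px i + w i <= X + sumf w L /\ py i = 0) /\
   (forall i j, In i L -> In j L -> i <> j ->
       interiors_disjoint (px i) (py i) (w i) (h i) (px j) (py j) (w j) (h j)).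
Proof.
  revert X. induction L as [|x L IH]; intros X HN HB.
  - exists (fun _ => 0), (fun _ => 0). split; intros; contradiction.
  - inversion HN as [|? ? Hx HN']; subst.
    assert (Hw : 0 <= w x) by (apply HB; left; auto).
    assert (HL : 0 <= sumf w L) by (apply sumf_nonneg; intros; apply HB; right; auto).
    destruct (IH (X + w x) HN') as [px [py [Hin Hd]]]; [intros; apply HB; right; auto|].
    exists (fun i => if Nat.eq_dec i x then X else px i),
           (fun i => if Nat.eq_dec i x then 0 else py i).
    simpl sumf. split.
    * intros i [<-|Hi].
      -- destruct (Nat.eq_dec x x) as [_|]; [|congruence]. repeat split; try lra.
      -- destruct (Nat.eq_dec i x) as [->|_]; [contradiction|].
         destruct (Hin i Hi) as [? [? ?]]. repeat split; try lra.
    * assert (Hxi : forall i, In i L -> interiors_disjoint X 0 (w x) (h x) (px i) (py i) (w i) (h i)).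
      { intros i Hi. destruct (Hin i Hi) as [? [? ?]]. unfold interiors_disjoint. left; lra. }
      intros i j Hi Hj Hij.
      destruct (Nat.eq_dec i x) as [->|Hix]; destruct (Nat.eq_dec j x) as [->|Hjx].
      -- congruence.
      -- destruct Hj as [|Hj]; [congruence|]. apply Hxi; auto.
      -- destruct Hi as [|Hi]; [congruence|]. apply disj_sym, Hxi; auto.
      -- destruct Hi as [|Hi]; [congruence|]. destruct Hj as [|Hj]; [congruence|]. auto.
Qed.

Lemma floor_ex : forall M r, 0 <= r < INR M -> exists d, INR d <= r < INR d + 1.
Proof.
  induction M as [|M IH]; intros r [H1 H2].
  - simpl in H2. lra.
  - destruct (Rlt_dec r (INR M)).
    + apply IH; lra.
    + exists M. rewrite S_INR in H2. lra.
Qed.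

Lemma sumf_scale k f L : sumf (fun i => k * f i) L = k * sumf f L.
Proof. induction L; simpl; [ring| rewrite IHL; ring]. Qed.

Definition tallb (h : nat -> R) (N : R) (i : nat) : bool :=
  if Rle_dec (2 * h i) N then false else true.

Definition cost (w h : nat -> R) (N : R) (i : nat) : R :=
  if Rle_dec (2 * h i) N then (2 / N) * (w i * h i) else w i.

Lemma cost_split w h N L : 0 < N ->
  N * sumf (cost w h N) L = N * sumf w (filter (tallb h N) L) +
     2 * sumf (fun i => w i * h i) (filter (fun i => negb (tallb h N i)) L).
Proof.
  intros HN. induction L as [|x L IH]; [simpl; ring|].
  simpl. unfold cost at 1. destruct (Rle_dec (2 * h x) N) as [r|r].
  - assert (E : tallb h N x = false) by (unfold tallb; destruct Rle_dec; tauto).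
    rewrite E; simpl. rewrite Rmult_plus_distr_l, IH. field. lra.
  - assert (E : tallb h N x = true) by (unfold tallb; destruct Rle_dec; tauto).
    rewrite E; simpl. rewrite Rmult_plus_distr_l, IH. ring.
Qed.

Lemma packable_nil w h W H : packable w h [] W H.
Proof. exists (fun _ => 0), (fun _ => 0). split; intros; contradiction. Qed.

Theorem mainTheorem16 (eps_s eps_a eps_small N : R) (n : nat) (w h : nat -> R) :
  0 < eps_s < 1/2 ->
  0 < eps_a < 1/2 ->
  0 < eps_small <= eps_s / 2 ->
  0 < N ->
  (forall i, (i < n)%nat -> 0 < w i /\ 0 < h i) ->
  (forall i, (i < n)%nat -> w i <= eps_small * N /\ h i <= N) ->
  area w h (seq 0 n) <= (1/2 + eps_a) * N ^ 2 ->
  exists S : list nat,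
    NoDup S /\ (forall i, In i S -> (i < n)%nat) /\
    (1 - 2 * eps_s - 2 * eps_a) * INR n <= INR (length S) /\
    packable w h S ((1 - eps_s) * N) N.
Proof.
  intros [Hs1 Hs2] [Ha1 Ha2] [He1 He2] HN Hpos Hbd Harea.
  assert (Hn0 : 0 <= INR n) by apply pos_INR.
  destruct (Rle_dec (1 - 2 * eps_s - 2 * eps_a) 0) as [Hneg|Hp].
  { exists []. split; [constructor|]. split; [intros i []|]. split; [simpl; nra|].
    apply packable_nil. }
  destruct (Nat.eq_dec n 0) as [->|Hn].
  { exists []. split; [constructor|]. split; [intros i []|]. split; [simpl; lra|].
    apply packable_nil. }
  assert (Hnp : 0 < INR n) by (apply lt_0_INR; lia).
  set (dl := 2 * eps_s + 2 * eps_a) in *.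
  destruct (floor_ex (S n) (dl * INR n)) as [d [Hd1 Hd2]].
  { rewrite S_INR. unfold dl in *. split; nra. }
  assert (Hdn : (d <= n)%nat).
  { apply INR_le. unfold dl in *. nra. }
  destruct (select (cost w h N) (seq 0 n) (seq_NoDup n 0) d) as [S [HS [Hincl [Hlen Hb]]]].
  { rewrite length_seq; auto. }
  rewrite length_seq in Hlen, Hb.
  assert (HinS : forall i, In i S -> (i < n)%nat).
  { intros i Hi. apply Hincl, in_seq in Hi. lia. }
  exists S. split; [auto|]. split; [auto|]. split.
  { rewrite Hlen, minus_INR by auto. unfold dl in *. lra. }
  assert (HB : forall i, In i S -> 0 < w i <= eps_small * N /\ 0 < h i <= N).
  { intros i Hi. specialize (HinS i Hi). destruct (Hpos i HinS); destruct (Hbd i HinS).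
    repeat split; lra. }
  set (T := filter (tallb h N) S).
  set (Sh := filter (fun i => negb (tallb h N i)) S).
  destruct (sort_exists w Sh) as [M [PM SM]].
  assert (HMS : forall z, In z M -> In z S /\ tallb h N z = false).
  { intros z Hz. apply (Permutation_in z (Permutation_sym PM)) in Hz.
    unfold Sh in Hz. apply filter_In in Hz. destruct Hz as [? Hz].
    split; auto. destruct (tallb h N z); auto. }
  assert (HTS : forall z, In z T -> In z S /\ tallb h N z = true).
  { intros z Hz. unfold T in Hz. apply filter_In in Hz. auto. }
  destruct (row_pack w h 0 T) as [pxT [pyT [HinT HdT]]].
  { apply NoDup_filter; auto. }
  { intros z Hz. destruct (HTS z Hz) as [Hz' _]. destruct (HB z Hz'). lra. }
  assert (HwT : 0 <= sumf w T).
  { apply sumf_nonneg. intros z Hz. destruct (HTS z Hz) as [Hz' _]. destruct (HB z Hz'). lra. }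
  destruct (col_pack w h N (eps_small * N) (sumf w T) M) as [pxC [pyC [E [HE0 [HE [HinC HdC]]]]]].
  { auto. } { nra. }
  { apply (Permutation_NoDup PM). apply NoDup_filter; auto. }
  { auto. }
  { intros z Hz. destruct (HMS z Hz) as [Hz' _]. auto. }
  assert (Hkey : sumf w T + E <= (1 - eps_s) * N).
  { assert (HaM : area w h M = sumf (fun i => w i * h i) Sh).
    { rewrite area_sumf. symmetry. apply sumf_perm; auto. }
    assert (Hsplit := cost_split w h N S HN). fold T Sh in Hsplit.
    set (CS := sumf (cost w h N) S) in *.
    set (C := sumf (cost w h N) (seq 0 n)) in *.
    assert (Hc : forall i, (i < n)%nat -> 0 <= cost w h N i <= eps_small * N /\
                  cost w h N i <= (2 / N) * (w i * h i)).
    { intros i Hi. destruct (Hpos i Hi) as [Hw Hh]. destruct (Hbd i Hi) as [Hw' Hh'].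
      unfold cost. assert (0 < w i * h i) by (apply Rmult_lt_0_compat; auto).
      assert (0 < 2 / N) by (apply Rdiv_lt_0_compat; lra).
      destruct (Rle_dec (2 * h i) N) as [r|r].
      - split; [|lra]. split; [nra|].
        assert (E1 : 2 / N * (w i * h i) = w i * ((2 * h i) / N)) by (field; lra).
        rewrite E1. assert ((2 * h i) / N <= 1).
        { apply (Rmult_le_reg_r N); [lra|]. unfold Rdiv. rewrite Rmult_assoc, Rinv_l by lra. lra. }
        nra.
      - split; [lra|].
        assert (E1 : 2 / N * (w i * h i) = w i * ((2 * h i) / N)) by (field; lra).
        rewrite E1. assert (1 <= (2 * h i) / N).
        { apply (Rmult_le_reg_r N); [lra|]. unfold Rdiv. rewrite Rmult_assoc, Rinv_l by lra. lra. }
        nra. }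
    assert (HC0 : 0 <= C).
    { apply sumf_nonneg. intros i Hi. apply in_seq in Hi. apply (Hc i). lia. }
    assert (HC1 : C <= INR n * (eps_small * N)).
    { rewrite <- (length_seq n 0). apply sumf_bound. intros i Hi. apply in_seq in Hi. apply (Hc i). lia. }
    assert (HC2 : C <= (1 + 2 * eps_a) * N).
    { apply Rle_trans with (sumf (fun i => (2 / N) * (w i * h i)) (seq 0 n)).
      { apply sumf_le. intros i Hi. apply in_seq in Hi. apply (Hc i). lia. }
      rewrite sumf_scale, <- area_sumf.
      apply Rle_trans with ((2 / N) * ((1/2 + eps_a) * N ^ 2)).
      { apply Rmult_le_compat_l; auto. apply Rlt_le, Rdiv_lt_0_compat; lra. }
      right. field. lra. }
    rewrite minus_INR in Hb by auto.
    assert (Hk : INR n - INR d <= (1 - dl) * INR n + 1) by lra.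
    assert (H1 : INR n * CS <= ((1 - dl) * INR n + 1) * C).
    { apply Rle_trans with ((INR n - INR d) * C); auto. apply Rmult_le_compat_r; auto. }
    assert (H2 : (1 - dl) * INR n * C <= (1 - dl) * INR n * ((1 + 2 * eps_a) * N)).
    { apply Rmult_le_compat_l; auto. unfold dl in *; nra. }
    assert (H3 : INR n * CS <= INR n * ((1 - dl) * ((1 + 2 * eps_a) * N) + eps_small * N)) by nra.
    assert (H4 : CS <= (1 - dl) * ((1 + 2 * eps_a) * N) + eps_small * N).
    { apply (Rmult_le_reg_l (INR n)); auto. }
    assert (H5 : (1 - dl) * ((1 + 2 * eps_a) * N) <= (1 - 2 * eps_s) * N).
    { unfold dl. assert (0 <= eps_a * (eps_s + eps_a) * N).
      { apply Rmult_le_pos; [|lra]. nra. } nra. }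
    assert (H6 : N * E <= N * (eps_small * N) + N * (CS - sumf w T)).
    { rewrite HaM in HE. lra. }
    assert (H7 : E <= eps_small * N + (CS - sumf w T)).
    { apply (Rmult_le_reg_l N); auto. lra. }
    assert (eps_small * N <= eps_s / 2 * N) by (apply Rmult_le_compat_r; lra).
    lra. }
  exists (fun i => if tallb h N i then pxT i else pxC i),
         (fun i => if tallb h N i then pyT i else pyC i).
  split.
  - intros i Hi. destruct (HB i Hi) as [[Hw1 Hw2] [Hh1 Hh2]].
    destruct (tallb h N i) eqn:Et.
    + assert (HiT : In i T) by (unfold T; apply filter_In; auto).
      destruct (HinT i HiT) as [? [? ?]]. repeat split; lra.
    + assert (HiM : In i M).
      { apply (Permutation_in i PM). unfold Sh. apply filter_In. rewrite Et. auto. }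
      destruct (HinC i HiM) as [? [? [? ?]]]. repeat split; lra.
  - intros i j Hi Hj Hij.
    destruct (HB i Hi) as [[Hw1 Hw2] [Hh1 Hh2]].
    destruct (HB j Hj) as [[Hw1' Hw2'] [Hh1' Hh2']].
    destruct (tallb h N i) eqn:Ei; destruct (tallb h N j) eqn:Ej.
    + apply HdT; auto; unfold T; apply filter_In; auto.
    + assert (HiT : In i T) by (unfold T; apply filter_In; auto).
      assert (HjM : In j M).
      { apply (Permutation_in j PM). unfold Sh. apply filter_In. rewrite Ej. auto. }
      destruct (HinT i HiT) as [? [? ?]]. destruct (HinC j HjM) as [? [? [? ?]]].
      unfold interiors_disjoint. left; lra.
    + assert (HjT : In j T) by (unfold T; apply filter_In; auto).
      assert (HiM : In i M).
      { apply (Permutation_in i PM). unfold Sh. apply filter_In. rewrite Ei. auto. }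
      destruct (HinT j HjT) as [? [? ?]]. destruct (HinC i HiM) as [? [? [? ?]]].
      unfold interiors_disjoint. right; left; lra.
    + apply HdC; auto.
      * apply (Permutation_in i PM). unfold Sh. apply filter_In. rewrite Ei. auto.
      * apply (Permutation_in j PM). unfold Sh. apply filter_In. rewrite Ej. auto.
Qed.
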